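(* Let $C$ be a linear subspace of $\mathbb{F}_q^\nu$ endowed with the Hamming metric, with coset leader weight distribution $(\alpha_0,\alpha_1,\dots,\alpha_\nu)$. Then there exist a finite-dimensional vector space $V$ over $\mathbb{F}_q$ and a projective weight $\operatorname{wt}_{\mathcal{F}}$ on $V$ such that $\alpha_i=|\{v\in V:\operatorname{wt}_{\mathcal{F}}(v)=i\}|$ for every $i=0,1,\dots,\nu$.
   Context: The coset leader weight of a coset $y+C$ is $\min\{\operatorname{wt}_H(x):x\in y+C\}$; $\alpha_i$ is the number of cosets of $C$ in $\mathbb{F}_q^\nu$ of coset leader weight $i$. A projective weight on $V$ is $\operatorname{wt}_{\mathcal{F}}(v)=\min(\{|I|:I\subseteq\mathcal{F},v\in\langle I\rangle\}\cup\{\infty\})$ for a set $\mathcal{F}\subset V$ of pairwise linearly independent nonzero vectors. *)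

(* Defs.v *)
From HB Require Import structures.
From mathcomp Require Import all_boot all_order all_algebra all_field.
Set Implicit Arguments. Unset Strict Implicit. Unset Printing Implicit Defensive.
Import GRing.Theory.
Local Open Scope ring_scope.

Definition hamming_wt (F : finFieldType) (nu : nat) (x : 'rV[F]_nu) : nat :=
  #|[set j : 'I_nu | x ord0 j != 0]|.

Definition cosets (F : finFieldType) (nu : nat) (C : {vspace 'rV[F]_nu})
  : {set {set 'rV[F]_nu}} :=
  [set [set y + c | c in C] | y : 'rV[F]_nu].

(* Coset leader weight: min of Hamming weights over the coset
   (the default nu is never reached for a nonempty coset, since wt <= nu). *)
Definition coset_leader_wt (F : finFieldType) (nu : nat)
  (K : {set 'rV[F]_nu}) : nat :=
  \big[minn/nu]_(x in K) hamming_wt x.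

Definition alpha (F : finFieldType) (nu : nat) (C : {vspace 'rV[F]_nu}) (i : nat)
  : nat :=
  #|[set K in cosets C | coset_leader_wt K == i]|.

Definition proj_family (F : finFieldType) (n : nat) (Fam : {set 'rV[F]_n}) : Prop :=
  (forall u, u \in Fam -> u != 0) /\
  (forall u v, u \in Fam -> v \in Fam -> u != v -> free [:: u; v]).

(* Projective weight wt_Fam(v) = min{|I| : I subset Fam, v in <I>},
   with None standing for infinity. The default #|Fam| of the min is
   harmless since every admissible I has #|I| <= #|Fam|. *)
Definition proj_wt (F : finFieldType) (n : nat) (Fam : {set 'rV[F]_n})
  (v : 'rV[F]_n) : option nat :=
  if [exists I : {set 'rV[F]_n}, (I \subset Fam) && (v \in <<enum I>>%VS)]
  then Some (\big[minn/#|Fam|]_(I : {set 'rV[F]_n} |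
                (I \subset Fam) && (v \in <<enum I>>%VS)) #|I|)
  else None.

(* Main.v *)
Require Import Defs.
From HB Require Import structures.
From mathcomp Require Import all_boot all_order all_algebra all_field.
Set Implicit Arguments. Unset Strict Implicit. Unset Printing Implicit Defensive.
Import GRing.Theory.
Local Open Scope ring_scope.

Section BM.
Variables (I : finType) (P : pred I) (G : I -> nat) (d : nat).
Lemma bm_le i : P i -> (\big[minn/d]_(j | P j) G j <= G i)%N.
Proof.
move=> Pi; rewrite -big_filter.
have : i \in [seq j <- index_enum I | P j] by rewrite mem_filter Pi mem_index_enum.
elim: [seq j <- _ | _] => // a r IH; rewrite inE big_cons => /orP[/eqP<-|/IH].
  exact: geq_minl.
by move=> h; rewrite geq_min h orbT.
Qed.
Lemma bm_ge m : (m <= d)%N -> (forall i, P i -> m <= G i)%N ->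
  (m <= \big[minn/d]_(j | P j) G j)%N.
Proof.
move=> md H; apply: (big_ind (fun x => m <= x)%N) => //.
  by move=> x y hx hy; rewrite leq_min hx.
Qed.
End BM.

Section Main.
Variables (F : finFieldType) (nu : nat) (C : {vspace 'rV[F]_nu}).
Notation V := 'rV[F]_nu.

Definition f (x : V) : V := x - projv C x.
Lemma fD x y : f (x + y) = f x + f y.
Proof. by rewrite /f linearD /=; rewrite opprD addrACA. Qed.
Lemma fZ (k : F) x : f (k *: x) = k *: f x.
Proof. by rewrite /f linearZ /= scalerBr. Qed.
Lemma fN x : f (- x) = - f x.
Proof. by rewrite -scaleN1r fZ scaleN1r. Qed.
Lemma fB x y : f (x - y) = f x - f y.
Proof. by rewrite fD fN. Qed.
Lemma f0 x : (f x == 0) = (x \in C).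
Proof.
apply/eqP/idP => [|xC]; last by rewrite /f projv_id ?subrr.
by move/eqP; rewrite subr_eq0 => /eqP ->; apply: memv_proj.
Qed.
Lemma f_sum (J : finType) (G : J -> V) : f (\sum_j G j) = \sum_j f (G j).
Proof.
elim/big_rec2: _ => [|j a b _ <-]; first by rewrite /f linear0 subrr.
by rewrite fD.
Qed.

Definition e (j : 'I_nu) : V := delta_mx 0 j.
Definition fe j := f (e j).
Definition nrm (u : V) : V :=
  if [pick j | u 0 j != 0] is Some j then (u 0 j)^-1 *: u else u.
Definition Fam : {set V} := [set nrm (fe j) | j in [pred j | fe j != 0]].

Lemma N1 u : u != 0 -> exists2 s, s != 0 & nrm u = s *: u.
Proof.
move=> nz; rewrite /nrm; case: pickP => [j hj|none].
  by exists (u 0 j)^-1; rewrite // invr_eq0.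
by case/eqP: nz; apply/rowP => j; rewrite mxE; have := none j => /negbFE/eqP.
Qed.

Lemma N2 (c : F) u : c != 0 -> nrm (c *: u) = nrm u.
Proof.
move=> cnz; rewrite /nrm.
have -> : [pick j | (c *: u) 0 j != 0] = [pick j | u 0 j != 0].
  by apply: eq_pick => j /=; rewrite mxE mulf_eq0 (negbTE cnz).
case: pickP => [j _|none]; first by rewrite mxE scalerA invfM mulrAC mulVf // mul1r.
have -> : u = 0 by apply/rowP => j; rewrite mxE; have := none j => /negbFE/eqP.
by rewrite scaler0.
Qed.

Lemma Nid u : u != 0 -> nrm (nrm u) = nrm u.
Proof. by move=> nz; have [s snz hs] := N1 nz; rewrite {1}hs N2. Qed.

Lemma W0 : hamming_wt (0 : V) = 0%N.
Proof. by apply/eqP; rewrite cards_eq0; apply/eqP/setP => j; rewrite !inE mxE eqxx. Qed.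

Lemma W1 (x y : V) : (hamming_wt (x + y) <= hamming_wt x + hamming_wt y)%N.
Proof.
rewrite /hamming_wt; apply: leq_trans (leq_card_setU _ _).1.
apply: subset_leq_card; apply/subsetP => j; rewrite !inE mxE.
by case: (x 0 j =P 0) => [->|//]; rewrite add0r.
Qed.

Lemma W2 (k : F) j : (hamming_wt (k *: e j) <= 1)%N.
Proof.
rewrite /hamming_wt; apply: leq_trans (_ : #|[set j]| <= 1)%N; last by rewrite cards1.
apply: subset_leq_card; apply/subsetP => i.
rewrite !inE !mxE; case: (i =P j) => // _; by rewrite andbF mulr0 eqxx.
Qed.

Lemma W3 (x : V) : (hamming_wt x <= nu)%N.
Proof. by rewrite /hamming_wt; apply: leq_trans (max_card _) _; rewrite card_ord. Qed.

Lemma f00 : f 0 = 0.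
Proof. by rewrite /f linear0 subr0. Qed.

Lemma L2 z : exists I : {set V}, [/\ I \subset Fam, f z \in <<enum I>>%VS &
   (#|I| <= hamming_wt z)%N].
Proof.
exists [set nrm (fe j) | j in [pred j | (z 0 j != 0) && (fe j != 0)]]; split.
- apply/subsetP => u /imsetP[j]; rewrite inE => /andP[_ hj] ->.
  by apply/imsetP; exists j.
- rewrite {1}(row_sum_delta z) f_sum; apply: memv_suml => j _; rewrite fZ.
  case: (z 0 j =P 0) => [->|/eqP nz]; first by rewrite scale0r mem0v.
  case: (fe j =P 0) => [fz|/eqP fnz]; first by rewrite /fe /e in fz; rewrite fz scaler0 mem0v.
  apply: memvZ; have [s snz hs] := N1 fnz.
  have -> : f (delta_mx 0 j) = s^-1 *: nrm (fe j) by rewrite hs scalerA mulVf // scale1r.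
  apply: memvZ; apply: memv_span; rewrite mem_enum; apply/imsetP; exists j => //.
  by rewrite inE nz.
- apply: leq_trans (leq_imset_card _ _) _; apply: subset_leq_card.
  by apply/subsetP => j; rewrite !inE => /andP[].
Qed.

Lemma L1 (X : seq V) v : all (mem Fam) X -> v \in <<X>>%VS ->
  exists z, f z = v /\ (hamming_wt z <= size X)%N.
Proof.
elim: X v => [|u X IH] v /=.
  by rewrite span_nil memv0 => _ /eqP ->; exists 0; rewrite f00 W0.
case/andP=> uF aX; rewrite span_cons => /memv_addP[a ha [w hw ->]].
have [z [fz wz]] := IH w aX hw.
case/vlineP: ha => k ->.
case/imsetP: uF => j; rewrite inE => fnz ->.
have [s snz ->] := N1 fnz.
exists ((k * s) *: e j + z); split; first by rewrite fD fZ fz scalerA.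
by apply: leq_trans (W1 _ _) _; exact: (leq_add (W2 _ _) wz).
Qed.

Lemma famP : proj_family Fam.
Proof.
have nzF u : u \in Fam -> u != 0.
  case/imsetP => j; rewrite inE => fnz ->; have [s snz ->] := N1 fnz.
  by rewrite scaler_eq0 negb_or snz.
split=> // u v uF vF uv.
rewrite free_cons /= span_seq1 free_cons span_nil memv0 nzF //=.
have -> : free (Nil (matrix F 1 nu)) by rewrite /free span_nil dimv0.
rewrite andbT.
apply/negP => /vlineP[k ek].
have knz : k != 0 by apply: contra_neq (nzF _ uF); rewrite ek => ->; rewrite scale0r.
have nid w : w \in Fam -> nrm w = w.
  by case/imsetP => j; rewrite inE => fnz ->; rewrite Nid.
by case/eqP: uv; rewrite -(nid u uF) ek N2 // nid.
Qed.

Definition coset (y : V) : {set V} := [set y + c | c in C].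

Lemma mem_coset x w : (w \in coset x) = (f w == f x).
Proof.
apply/imsetP/eqP => [[c cC ->]|ew].
  by move: cC; rewrite -f0 fD => /eqP ->; rewrite addr0.
by exists (w - x); [rewrite -f0 fB ew subrr | rewrite addrC subrK].
Qed.

Lemma clw_le x (J : {set V}) : J \subset Fam -> f x \in <<enum J>>%VS ->
  (coset_leader_wt (coset x) <= #|J|)%N.
Proof.
move=> JF hJ.
have aJ : all (mem Fam) (enum J).
  apply/allP => u; rewrite mem_enum; exact: (subsetP JF).
have [z [fz wz]] := L1 aJ hJ.
rewrite cardE; apply: leq_trans wz; apply: bm_le.
by rewrite mem_coset fz.
Qed.

Lemma key x : proj_wt Fam (f x) = Some (coset_leader_wt (coset x)).
Proof.
rewrite /proj_wt; have [I [IF hI cI]] := L2 x.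
case: ifP => [_|/existsP[]]; last by exists I; rewrite IF hI.
congr Some; apply/eqP; rewrite eqn_leq; apply/andP; split.
  apply: bm_ge.
    apply: leq_trans (W3 x); apply: leq_trans cI; apply: bm_le; by rewrite IF hI.
  move=> w; rewrite mem_coset => /eqP ew; have [I' [IF' hI' cI']] := L2 w.
  apply: leq_trans cI'; apply: bm_le; by rewrite IF' -ew hI'.
apply: bm_ge; first by apply: leq_trans (clw_le IF hI) (subset_leq_card IF).
by move=> J /andP[JF hJ]; apply: clw_le.
Qed.
End Main.

Unset Implicit Arguments.
Set Strict Implicit.
Theorem proposition6p3 (F : finFieldType) (nu : nat) (C : {vspace 'rV[F]_nu}) :
  exists (n : nat) (Fam : {set 'rV[F]_n}),
    proj_family Fam /\
    forall i : nat, (i <= nu)%N ->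
      alpha C i = #|[set v : 'rV[F]_n | proj_wt Fam v == Some i]|.
Proof.
exists nu, (Fam C); split; first exact: famP.
move=> i _; rewrite /alpha.
pose h (K : {set 'rV[F]_nu}) := f C (odflt 0 [pick w in K]).
have hc y : h (coset C y) = f C y.
  rewrite /h; case: pickP => [w /=|none]; first by rewrite mem_coset => /eqP.
  by have := none y; rewrite mem_coset eqxx.
have -> : [set v | proj_wt (Fam C) v == Some i] =
          h @: [set K in cosets C | coset_leader_wt K == i].
  apply/setP => v; rewrite inE; apply/idP/imsetP.
    move=> hv; move: (hv); rewrite /proj_wt; case: ifP => // /existsP[J /andP[JF vJ]] _.
    have aJ : all (mem (Fam C)) (enum J).
      apply/allP => u; rewrite mem_enum; exact: (subsetP JF).
    have [z [fz _]] := L1 aJ vJ.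
    exists (coset C z); last by rewrite hc.
    rewrite inE; apply/andP; split; first by apply/imsetP; exists z.
    by move: hv; rewrite -fz key.
  case=> K; rewrite inE => /andP[/imsetP[y _ ->] ci] ->.
  by rewrite hc key.
rewrite card_in_imset //.
move=> K1 K2; rewrite !inE => /andP[/imsetP[y1 _ ->] _] /andP[/imsetP[y2 _ ->] _].
by rewrite !hc => e12; apply/setP => w; rewrite !mem_coset e12.
Qed.
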